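(* Let $A=\{a_1,\dots,a_k\}$ with $k\ge2$, and let $Z\subseteq A^+$ be a finite code of standard form. If $\gcd(|Z_{a_1}|,|Z_{a_2}|,\dots,|Z_{a_k}|)=1$, then $Z$ is not an alt-induced code.
   Context: $A^+$ is the set of non-empty words over $A$; $XY=\{xy:x\in X,y\in Y\}$; $|S|$ denotes cardinality. For $a\in A$, $Z_a$ is the set of words of $Z$ beginning with the letter $a$ (possibly empty, with $|Z_a|=0$). A code is a subset of $A^+$ in which every word has at most one factorization into its elements. A finite code $Z$ over $A$ (with $|A|\ge2$) is of standard form if every word of $Z$ has length at least $2$, it is not the case that all words of $Z$ begin with the same letter, and it is not the case that all words of $Z$ end with the same letter. For non-empty $X,Y\subseteq A^+$, $(X,Y)$ is an alternative code if $XY$ is a code and each element of $XY$ has exactly one factorization $xy$ with $x\in X,y\in Y$ (equivalently, no word admits two different similar alternative factorizations on $(X,Y)$). $Z$ is an alt-induced code if $Z=XY$ for some alternative code $(X,Y)$. *)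

(* Defs.v *)
(* Words over a finite alphabet A are [seq A]; sets of words
   are predicates [seq A -> Prop]; the finite code Z is a duplicate-free list. *)
From mathcomp Require Import all_boot.
Set Implicit Arguments. Unset Strict Implicit. Unset Printing Implicit Defensive.

Section Codes.
Variable A : finType.

Definition is_code (W : seq A -> Prop) : Prop :=
  (forall w, W w -> w <> [::]) /\
  forall s1 s2 : seq (seq A),
    (forall u, u \in s1 -> W u) -> (forall u, u \in s2 -> W u) ->
    flatten s1 = flatten s2 -> s1 = s2.

Definition concat_set (X Y : seq A -> Prop) (w : seq A) : Prop :=
  exists x y, [/\ X x, Y y & w = x ++ y].

Definition alternative_code (X Y : seq A -> Prop) : Prop :=
  [/\ (exists x, X x) /\ (exists y, Y y),
      (forall x, X x -> x <> [::]), (forall y, Y y -> y <> [::]),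
      is_code (concat_set X Y) &
      forall x1 y1 x2 y2, X x1 -> Y y1 -> X x2 -> Y y2 ->
        x1 ++ y1 = x2 ++ y2 -> x1 = x2 /\ y1 = y2].

Definition alt_induced (Z : seq A -> Prop) : Prop :=
  exists X Y : seq A -> Prop,
    alternative_code X Y /\ forall w, Z w <-> concat_set X Y w.

Definition standard_form (Z : seq (seq A)) : Prop :=
  [/\ (forall w, w \in Z -> 2 <= size w),
      ~ (exists a : A, forall w, w \in Z -> ohead w = Some a) &
      ~ (exists a : A, forall w, w \in Z -> ohead (rev w) = Some a)].

(* |Z_a| : number of words of Z beginning with letter a *)
Definition card_begin (Z : seq (seq A)) (a : A) : nat :=
  count (fun w => ohead w == Some a) Z.

End Codes.

(* Main.v *)
Require Import Defs.
From mathcomp Require Import all_boot.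
From Stdlib Require Import ClassicalEpsilon.
Set Implicit Arguments. Unset Strict Implicit. Unset Printing Implicit Defensive.

Definition decb (P : Prop) : bool :=
  if excluded_middle_informative P then true else false.

Lemma decbP (P : Prop) : reflect P (decb P).
Proof. rewrite /decb; case: excluded_middle_informative => H; by constructor. Qed.

Lemma dvdn_biggcd (A : finType) (F : A -> nat) d :
  (forall a, d %| F a) -> d %| \big[gcdn/0]_(a : A) F a.
Proof.
move=> H; elim/big_ind: _ => //.
by move=> x y Hx Hy; rewrite dvdn_gcd Hx Hy.
Qed.

Theorem theoremT (A : finType) (Z : seq (seq A)) :
  1 < #|A| ->
  uniq Z ->
  is_code (fun w => w \in Z) ->
  standard_form Z ->
  \big[gcdn/0]_(a : A) card_begin Z a = 1 ->
  ~ alt_induced (fun w => w \in Z).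
Proof.
move=> _ uZ _ [_ _ Hlast] Hg [X [Y [[[[x0 Hx0] [y0 Hy0]] Xne Yne _ Huniq] HZ]]].
pose Pre := undup (flatten [seq [seq take n w | n <- iota 0 (size w).+1] | w <- Z]).
pose Suf := undup (flatten [seq [seq drop n w | n <- iota 0 (size w).+1] | w <- Z]).
pose Ys := filter (fun y => decb (Y y)) Suf.
have memY : forall y, (y \in Ys) <-> Y y.
  move=> y; rewrite mem_filter; split; first by case/andP=> /decbP.
  move=> Hy; apply/andP; split; first exact/decbP.
  have [x Hx] : exists x, X x by exists x0.
  have HZ' : (x ++ y) \in Z by apply/HZ; exists x, y.
  rewrite mem_undup; apply/flattenP; exists [seq drop n (x ++ y) | n <- iota 0 (size (x++y)).+1].
    by apply/mapP; exists (x ++ y).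
  apply/mapP; exists (size x); last by rewrite drop_size_cat.
  by rewrite mem_iota add0n ltnS size_cat leq_addr.
have memX : forall a x, (x \in filter (fun x => decb (X x) && (ohead x == Some a)) Pre)
    <-> (X x /\ ohead x = Some a).
  move=> a x; rewrite mem_filter; split.
    by case/andP=> /andP[/decbP ? /eqP ?].
  move=> [Hx Ha]; rewrite Ha eqxx andbT; apply/andP; split; first exact/decbP.
  have HZ' : (x ++ y0) \in Z by apply/HZ; exists x, y0.
  rewrite mem_undup; apply/flattenP; exists [seq take n (x ++ y0) | n <- iota 0 (size (x++y0)).+1].
    by apply/mapP; exists (x ++ y0).
  apply/mapP; exists (size x); last by rewrite take_size_cat.
  by rewrite mem_iota add0n ltnS size_cat leq_addr.
have Hdiv : forall a, size Ys %| card_begin Z a.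
  move=> a; pose Xsa := filter (fun x => decb (X x) && (ohead x == Some a)) Pre.
  have -> : card_begin Z a = size [seq x ++ y | x <- Xsa, y <- Ys].
    rewrite /card_begin -size_filter; apply: perm_size; apply: uniq_perm.
    - exact: filter_uniq.
    - apply: allpairs_uniq; [exact: filter_uniq (undup_uniq _)|exact: filter_uniq (undup_uniq _)|].
      move=> [x1 y1] [x2 y2] /allpairsP[[p1 q1] [/= Hp1 Hq1 [-> ->]]]
        /allpairsP[[p2 q2] [/= Hp2 Hq2 [-> ->]]] /= E.
      have [Hx1 _] := (memX a p1).1 Hp1; have [Hx2 _] := (memX a p2).1 Hp2.
      have [-> ->] := Huniq _ _ _ _ Hx1 ((memY q1).1 Hq1) Hx2 ((memY q2).1 Hq2) E.
      by [].
    - move=> w; rewrite mem_filter; apply/idP/idP.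
      + case/andP=> /eqP Ha /HZ [x [y [Hx Hy Ew]]]; apply/allpairsP; exists (x, y); split => //=.
          apply/memX; split => //; move: Ha; rewrite Ew.
          case: x Hx {Ew} => [Hx|b x' _ /= //]; by case: (Xne _ Hx).
        exact/memY.
      + case/allpairsP=> [[x y] [/= /memX [Hx Ha] /memY Hy ->]].
        apply/andP; split; last by apply/HZ; exists x, y.
        case: x Hx Ha => [Hx|b x' _ /= -> //]; by case: (Xne _ Hx).
  by rewrite size_allpairs dvdn_mull.
have Hs : size Ys = 1.
  by apply/eqP; rewrite -dvdn1 -Hg; apply: dvdn_biggcd.
case Eys : Ys Hs => [|y []] // _.
have Hy : Y y by apply/memY; rewrite Eys mem_head.
have Hyy : forall y', Y y' -> y' = y.
  by move=> y' /memY; rewrite Eys inE => /eqP.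
case/lastP: y Eys Hy Hyy => [|y' b] _ Hy Hyy; first by move: (Yne _ Hy).
apply: Hlast; exists b => w /HZ [x [y1 [Hx /Hyy -> ->]]].
by rewrite rev_cat rev_rcons.
Qed.
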